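(* Let $\alpha\neq 0$ and let $\Sigma_1$ and $\Sigma_2$ be two $\alpha$-singular maximal surfaces. If $\Sigma_1$ and $\Sigma_2$ have a common tangent interior point $p$ and $\Sigma_1$ lies above $\Sigma_2$ around $p$, then $\Sigma_1$ and $\Sigma_2$ coincide in an open set around $p$.
   Context: $\mathbb L^3$ is $\mathbb R^3$ with the metric $dx^2+dy^2-dz^2$. An $\alpha$-singular maximal surface is a spacelike surface (Riemannian induced metric, timelike unit normal $N$) in the halfspace $z>0$ satisfying $H(p)=-\alpha\frac{\langle N(p),(0,0,1)\rangle}{z}$, where $H$ is the trace of the second fundamental form; locally it is a graph $z=u(x,y)$ with $|Du|<1$ solving $\mathrm{div}\frac{Du}{\sqrt{1-|Du|^2}}=\frac{\alpha}{u\sqrt{1-|Du|^2}}$. ''Above'' refers to the $z$-direction. *)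

(* Defs.v *)
From Stdlib Require Import Reals.
From Coquelicot Require Import Coquelicot.
Open Scope R_scope.

Definition px (f : R -> R -> R) (x y : R) : R := Derive (fun t => f t y) x.
Definition py (f : R -> R -> R) (x y : R) : R := Derive (fun t => f x t) y.

Definition cont2 (f : R -> R -> R) (x y : R) : Prop :=
  continuous (fun q : R * R => f (fst q) (snd q)) (x, y).

Definition C2_on (U : R * R -> Prop) (u : R -> R -> R) : Prop :=
  forall x y, U (x, y) ->
    ex_derive (fun t => u t y) x /\ ex_derive (fun t => u x t) y /\
    ex_derive (fun t => px u t y) x /\ ex_derive (fun t => px u x t) y /\
    ex_derive (fun t => py u t y) x /\ ex_derive (fun t => py u x t) y /\
    cont2 u x y /\ cont2 (px u) x y /\ cont2 (py u) x y /\
    cont2 (px (px u)) x y /\ cont2 (py (px u)) x y /\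
    cont2 (px (py u)) x y /\ cont2 (py (py u)) x y.

Definition Wf (u : R -> R -> R) (x y : R) : R :=
  sqrt (1 - (px u x y) ^ 2 - (py u x y) ^ 2).

(* The surface z = u(x,y), (x,y) in the open set U, is an alpha-singular
   maximal surface: it lies in z > 0, is spacelike (|Du| < 1), and
   div( Du / sqrt(1-|Du|^2) ) = alpha / (u sqrt(1-|Du|^2)). *)
Definition alpha_singular_maximal_graph (alpha : R) (U : R * R -> Prop)
  (u : R -> R -> R) : Prop :=
  open U /\ C2_on U u /\
  forall x y, U (x, y) ->
    0 < u x y /\
    (px u x y) ^ 2 + (py u x y) ^ 2 < 1 /\
    px (fun a b => px u a b / Wf u a b) x y
      + py (fun a b => py u a b / Wf u a b) x y
      = alpha / (u x y * Wf u x y).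

(* Main.v *)
Require Import Defs.
From Stdlib Require Import Reals Lra Psatz Classical ClassicalEpsilon List.
From Coquelicot Require Import Coquelicot.
Open Scope R_scope.

Lemma loc2 (P : R*R -> Prop) x y : locally (x,y) P ->
  exists d, 0<d /\ forall u v, Rabs(u-x)<d -> Rabs(v-y)<d -> P (u,v).
Proof.
  intros [e He]. exists e. split. apply cond_pos.
  intros u v Hu Hv. apply He. split; assumption.
Qed.

Lemma loc2_inv (P : R*R -> Prop) x y d : 0 < d ->
  (forall u v, Rabs(u-x)<d -> Rabs(v-y)<d -> P (u,v)) -> locally (x,y) P.
Proof.
  intros Hd H. exists (mkposreal d Hd). intros [u v] [H1 H2]. apply H; assumption.
Qed.

Lemma cont2_eps f x y : cont2 f x y -> forall e, 0 < e ->
  exists d, 0 < d /\ forall u v, Rabs(u-x)<d -> Rabs(v-y)<d -> Rabs (f u v - f x y) < e.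
Proof.
  intros Hc e He. apply continuity_2d_pt_filterlim in Hc.
  destruct (Hc (mkposreal e He)) as [d Hd].
  exists d. split. apply cond_pos. intros u v Hu Hv. apply (Hd u v Hu Hv).
Qed.
Lemma diff_partials (f : R -> R -> R) x y d :
  0 < d ->
  (forall u v, Rabs(u-x)<d -> Rabs(v-y)<d -> ex_derive (fun t => f u t) v) ->
  ex_derive (fun t => f t y) x ->
  continuity_2d_pt (fun u v => Derive (fun t => f u t) v) x y ->
  differentiable_pt_lim f x y (Derive (fun t => f t y) x) (Derive (fun t => f x t) y).
Proof.
  intros Hd Hy Hx Hc eps.
  assert (He2 : 0 < eps/2) by (generalize (cond_pos eps); lra).
  pose proof (Derive_correct _ _ Hx) as Dx. apply is_derive_Reals in Dx.
  destruct (Dx (eps/2) He2) as [d1 Hd1].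
  destruct (Hc (mkposreal _ He2)) as [d2 Hd2].
  assert (Hdm : 0 < Rmin d (Rmin d1 d2)).
  { apply Rmin_pos; [lra| apply Rmin_pos; apply cond_pos]. }
  exists (mkposreal _ Hdm). simpl. intros u v Hu Hv.
  assert (Hu1 : Rabs (u-x) < d) by (eapply Rlt_le_trans; [exact Hu| apply Rmin_l]).
  assert (Hu2 : Rabs (u-x) < d1) by (eapply Rlt_le_trans; [exact Hu| eapply Rle_trans; [apply Rmin_r|apply Rmin_l]]).
  assert (Hu3 : Rabs (u-x) < d2) by (eapply Rlt_le_trans; [exact Hu| eapply Rle_trans; [apply Rmin_r|apply Rmin_r]]).
  assert (Hv1 : Rabs (v-y) < d) by (eapply Rlt_le_trans; [exact Hv| apply Rmin_l]).
  assert (Hv3 : Rabs (v-y) < d2) by (eapply Rlt_le_trans; [exact Hv| eapply Rle_trans; [apply Rmin_r|apply Rmin_r]]).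
  destruct (MVT_gen (fun t => f u t) y v (fun t => Derive (fun s => f u s) t)) as [c [Hcb Hceq]].
  { intros t Ht. apply Derive_correct. apply Hy. exact Hu1.
    apply Rle_lt_trans with (Rabs (v-y)); [|exact Hv1].
    unfold Rmin, Rmax in Ht; destruct (Rle_dec y v); unfold Rabs; repeat destruct Rcase_abs; lra. }
  { intros t Ht. apply continuity_pt_filterlim. apply (ex_derive_continuous (fun s => f u s)).
    apply Hy. exact Hu1.
    apply Rle_lt_trans with (Rabs (v-y)); [|exact Hv1].
    unfold Rmin, Rmax in Ht; destruct (Rle_dec y v); unfold Rabs; repeat destruct Rcase_abs; lra. }
  simpl in Hceq.
  assert (Hc3 : Rabs (c - y) < d2).
  { apply Rle_lt_trans with (Rabs (v-y)); [|exact Hv3].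
    unfold Rmin, Rmax in Hcb; destruct (Rle_dec y v); unfold Rabs; repeat destruct Rcase_abs; lra. }
  specialize (Hd2 u c Hu3 Hc3). simpl in Hd2.
  set (fy := Derive (fun t => f x t) y) in *.
  set (fx := Derive (fun t => f t y) x) in *.
  set (g := Derive (fun s => f u s) c) in *.
  assert (A1 : Rabs (f u v - f u y - fy * (v - y)) <= eps/2 * Rabs (v-y)).
  { replace (f u v - f u y - fy * (v - y)) with ((g - fy) * (v - y)) by lra.
    rewrite Rabs_mult. apply Rmult_le_compat_r. apply Rabs_pos. lra. }
  assert (A2 : Rabs (f u y - f x y - fx * (u - x)) <= eps/2 * Rabs (u-x)).
  { destruct (Req_dec (u - x) 0) as [E|E].
    - rewrite E. replace u with x by lra. rewrite Rmult_0_r, Rabs_R0.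
      replace (f x y - f x y - 0) with 0 by ring. rewrite Rabs_R0. lra.
    - specialize (Hd1 (u - x) E Hu2). cbv beta in Hd1. replace (x + (u - x)) with u in Hd1 by ring.
      replace (f u y - f x y - fx * (u - x)) with (((f u y - f x y)/(u-x) - fx) * (u - x)) by (field; assumption).
      rewrite Rabs_mult. apply Rmult_le_compat_r. apply Rabs_pos. assert (Hd1' : Rabs ((f u y - f x y) / (u - x) - fx) < eps/2) by exact Hd1. lra. }
  pose proof (Rmax_l (Rabs (u - x)) (Rabs (v - y))).
  pose proof (Rmax_r (Rabs (u - x)) (Rabs (v - y))).
  replace (f u v - f x y - (fx * (u - x) + fy * (v - y))) with
     ((f u v - f u y - fy * (v - y)) + (f u y - f x y - fx * (u - x))) by ring.
  assert (Rabs (f u v - f u y - fy * (v - y) + (f u y - f x y - fx * (u - x))) <= eps * Rmax (Rabs (u - x)) (Rabs (v - y))).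
  { eapply Rle_trans. apply Rabs_triang.
    generalize (cond_pos eps); intro. nra. }
  exact H1.
Qed.
Lemma line_deriv g q1 q2 a b t gx gy :
  differentiable_pt_lim g (q1+t*a) (q2+t*b) gx gy ->
  is_derive (fun s => g (q1+s*a) (q2+s*b)) t (gx*a + gy*b).
Proof.
  intros H. apply is_derive_Reals.
  apply (derivable_pt_lim_comp_2d g (fun s => q1 + s*a) (fun s => q2 + s*b)); auto.
  - apply is_derive_Reals. auto_derive; auto; ring.
  - apply is_derive_Reals. auto_derive; auto; ring.
Qed.

Lemma C2_diff (U : R*R -> Prop) (u : R -> R -> R) (x y : R) : open U -> C2_on U u -> U (x,y) ->
  differentiable_pt_lim u x y (px u x y) (py u x y) /\
  differentiable_pt_lim (px u) x y (px (px u) x y) (py (px u) x y) /\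
  differentiable_pt_lim (py u) x y (px (py u) x y) (py (py u) x y).
Proof.
  intros Hop HC H.
  destruct (loc2 U x y (Hop _ H)) as [d [Hd HU]].
  destruct (HC x y H) as [E1 [E2 [E3 [E4 [E5 [E6 [C0 [C1 [C2 [C3 [C4 [C5 C6]]]]]]]]]]]].
  split; [|split].
  - apply (diff_partials u x y d Hd).
    + intros a b Ha Hb. apply (HC a b (HU a b Ha Hb)).
    + exact E1.
    + apply continuity_2d_pt_filterlim. exact C2.
  - apply (diff_partials (px u) x y d Hd).
    + intros a b Ha Hb. apply (HC a b (HU a b Ha Hb)).
    + exact E3.
    + apply continuity_2d_pt_filterlim. exact C4.
  - apply (diff_partials (py u) x y d Hd).
    + intros a b Ha Hb. apply (HC a b (HU a b Ha Hb)).
    + exact E5.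
    + apply continuity_2d_pt_filterlim. exact C6.
Qed.

Lemma u_line (U : R*R -> Prop) (u : R -> R -> R) (q1 q2 a b : R) : open U -> C2_on U u -> U (q1,q2) ->
  exists d, 0 < d /\ forall t, Rabs t < d -> U (q1+t*a, q2+t*b) /\
   is_derive (fun s => u (q1+s*a) (q2+s*b)) t
     (px u (q1+t*a) (q2+t*b) * a + py u (q1+t*a) (q2+t*b) * b).
Proof.
  intros Hop HC H.
  destruct (loc2 U q1 q2 (Hop _ H)) as [d [Hd HU]].
  exists (d / (Rabs a + Rabs b + 1)).
  assert (Hp : 0 < Rabs a + Rabs b + 1) by (generalize (Rabs_pos a) (Rabs_pos b); lra).
  split. apply Rdiv_lt_0_compat; lra.
  intros t Ht.
  assert (Ht' : Rabs t * (Rabs a + Rabs b + 1) < d).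
  { apply (Rmult_lt_compat_r (Rabs a + Rabs b + 1)) in Ht; auto.
    unfold Rdiv in Ht. rewrite Rmult_assoc, Rinv_l, Rmult_1_r in Ht; lra. }
  assert (HUt : U (q1+t*a, q2+t*b)).
  { apply HU.
    - replace (q1 + t*a - q1) with (t*a) by ring. rewrite Rabs_mult.
      generalize (Rabs_pos t) (Rabs_pos a) (Rabs_pos b); nra.
    - replace (q2 + t*b - q2) with (t*b) by ring. rewrite Rabs_mult.
      generalize (Rabs_pos t) (Rabs_pos a) (Rabs_pos b); nra. }
  split; auto.
  apply line_deriv. apply (C2_diff U u _ _ Hop HC HUt).
Qed.

Lemma lin2 (f g : R -> R) x df dg a b : is_derive f x df -> is_derive g x dg ->
  is_derive (fun s => f s * a + g s * b) x (df * a + dg * b).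
Proof.
  intros Hf Hg.
  apply (is_derive_plus (fun s => f s * a) (fun s => g s * b)).
  - exact (is_derive_scal_l f x df a Hf).
  - exact (is_derive_scal_l g x dg b Hg).
Qed.

Lemma u_line2 (U : R*R -> Prop) (u : R -> R -> R) (q1 q2 a b : R) : open U -> C2_on U u -> U (q1,q2) ->
  is_derive (fun s => px u (q1+s*a) (q2+s*b) * a + py u (q1+s*a) (q2+s*b) * b) 0
   ((px (px u) q1 q2 * a + py (px u) q1 q2 * b) * a + (px (py u) q1 q2 * a + py (py u) q1 q2 * b) * b).
Proof.
  intros Hop HC H.
  destruct (C2_diff U u q1 q2 Hop HC H) as [_ [Dx Dy]].
  assert (Ex : q1 + 0*a = q1) by ring. assert (Ey : q2 + 0 * b = q2) by ring.
  apply lin2; apply line_deriv; rewrite Ex, Ey; assumption.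
Qed.



Lemma onesided (phi : R -> R) L d : 0 < d -> is_derive phi 0 L ->
  (forall t, 0 < t < d -> phi 0 <= phi t) -> 0 <= L.
Proof.
  intros Hd HD Hm. destruct (Rle_lt_dec 0 L) as [|HL]; auto.
  apply is_derive_Reals in HD.
  assert (He : 0 < -L/2) by lra.
  destruct (HD _ He) as [d1 Hd1].
  set (h := Rmin d d1 / 2).
  assert (Hh : 0 < h) by (unfold h; assert (0 < Rmin d d1) by (apply Rmin_pos; [lra| apply cond_pos]); lra).
  assert (Hh1 : h < d) by (unfold h; generalize (Rmin_l d d1); lra).
  assert (Hh2 : h < d1) by (unfold h; generalize (Rmin_r d d1) (cond_pos d1); lra).
  assert (Hn : h <> 0) by (apply Rgt_not_eq; lra). assert (Ha : Rabs h < d1) by (rewrite Rabs_pos_eq; lra). specialize (Hd1 h Hn Ha).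
  specialize (Hm h ltac:(lra)). rewrite Rplus_0_l in Hd1.
  apply Rabs_lt_between in Hd1.
  assert ((phi h - phi 0)/h >= 0).
  { apply Rle_ge. unfold Rdiv. apply Rmult_le_pos. lra. left. apply Rinv_0_lt_compat. lra. }
  lra.
Qed.

Lemma loc_min_deriv0 (phi : R -> R) L d : 0 < d -> is_derive phi 0 L ->
  (forall t, Rabs t < d -> phi 0 <= phi t) -> L = 0.
Proof.
  intros Hd HD Hm.
  assert (A : 0 <= L).
  { apply (onesided phi L d Hd HD). intros t Ht. apply Hm. rewrite Rabs_pos_eq; lra. }
  assert (B : 0 <= - L).
  { apply (onesided (fun s => phi (- s)) (-L) d Hd).
    - replace (-L) with (-1 * L) by ring.
      apply (is_derive_comp phi (fun s => - s) 0). replace (- 0) with 0 by ring. exact HD.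
      auto_derive; auto; ring.
    - intros t Ht. replace (- 0) with 0 by ring. apply Hm. rewrite Rabs_Ropp, Rabs_pos_eq; lra. }
  lra.
Qed.

Lemma second_order (phi psi : R -> R) S d : 0 < d ->
  (forall t, Rabs t < d -> is_derive phi t (psi t)) ->
  (forall t, Rabs t < d -> phi 0 <= phi t) ->
  is_derive psi 0 S -> psi 0 = 0 /\ 0 <= S.
Proof.
  intros Hd HD Hm HS.
  assert (P0 : psi 0 = 0).
  { apply (loc_min_deriv0 phi (psi 0) d Hd); auto. apply HD. rewrite Rabs_R0; lra. }
  split; auto.
  destruct (Rle_lt_dec 0 S) as [|HL]; auto. exfalso.
  apply is_derive_Reals in HS.
  assert (He : 0 < -S/2) by lra.
  destruct (HS _ He) as [d1 Hd1].
  assert (Neg : forall h, 0 < h < d1 -> psi h < 0).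
  { intros h Hh. assert (Hn : h <> 0) by (apply Rgt_not_eq; lra). assert (Ha : Rabs h < d1) by (rewrite Rabs_pos_eq; lra). specialize (Hd1 h Hn Ha).
    rewrite Rplus_0_l, P0, Rminus_0_r in Hd1. apply Rabs_lt_between in Hd1.
    assert (psi h / h < 0) by lra.
    destruct (Rle_lt_dec 0 (psi h)); auto.
    assert (0 <= psi h / h) by (unfold Rdiv; apply Rmult_le_pos; [lra| left; apply Rinv_0_lt_compat; lra]).
    lra. }
  set (t1 := Rmin d d1 / 2).
  assert (Ht : 0 < t1) by (unfold t1; assert (0 < Rmin d d1) by (apply Rmin_pos; [lra| apply cond_pos]); lra).
  assert (Ht1 : t1 < d) by (unfold t1; generalize (Rmin_l d d1); lra).
  assert (Ht2 : t1 < d1) by (unfold t1; generalize (Rmin_r d d1) (cond_pos d1); lra).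
  assert (Dr : forall x, 0 <= x <= t1 -> is_derive phi x (psi x)).
  { intros x Hx. apply HD. rewrite Rabs_pos_eq; lra. }
  assert (Cr : forall x, 0 <= x <= t1 -> continuity_pt phi x).
  { intros x Hx. apply continuity_pt_filterlim. apply (ex_derive_continuous phi).
    exists (psi x). apply Dr; auto. }
  destruct (MVT_gen phi 0 (t1/2) psi) as [c1 [Hc1 E1]].
  { intros x Hx. rewrite Rmin_left in Hx by lra. rewrite Rmax_right in Hx by lra. apply Dr; lra. }
  { intros x Hx. rewrite Rmin_left in Hx by lra. rewrite Rmax_right in Hx by lra. apply Cr; lra. }
  destruct (MVT_gen phi (t1/2) t1 psi) as [c2 [Hc2 E2]].
  { intros x Hx. rewrite Rmin_left in Hx by lra. rewrite Rmax_right in Hx by lra. apply Dr; lra. }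
  { intros x Hx. rewrite Rmin_left in Hx by lra. rewrite Rmax_right in Hx by lra. apply Cr; lra. }
  rewrite Rmin_left in Hc1, Hc2 by lra. rewrite Rmax_right in Hc1, Hc2 by lra.
  assert (psi c1 <= 0).
  { destruct (Req_dec c1 0) as [->|]. lra. left. apply Neg. lra. }
  assert (psi c2 < 0) by (apply Neg; lra).
  specialize (Hm t1 ltac:(rewrite Rabs_pos_eq; lra)).
  nra.
Qed.

Lemma list_min {T : Type} (P : T -> Prop) (g : T -> R) (l : list T) :
  (exists t, In t l /\ P t) ->
  exists s, In s l /\ P s /\ forall t, In t l -> P t -> g s <= g t.
Proof.
  induction l as [|a l IH]; intros [t [Ht Pt]].
  - destruct Ht.
  - destruct (classic (exists t, In t l /\ P t)) as [Ex|NEx].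
    + destruct (IH Ex) as [s [Hs [Ps Hm]]].
      destruct (classic (P a /\ g a <= g s)) as [[Pa Ha]|Na].
      * exists a. split; [left; auto|]. split; auto.
        intros t' [E|Ht'] Pt'; [subst t'|]. lra. specialize (Hm t' Ht' Pt'). lra.
      * exists s. split; [right; auto|]. split; auto.
        intros t' [E|Ht'] Pt'; [subst t'|].
        -- destruct (Rle_lt_dec (g s) (g a)); auto. exfalso; apply Na; split; auto; lra.
        -- auto.
    + exists a. destruct Ht as [<-|Ht].
      * split; [left; auto|]. split; auto.
        intros t' [E|Ht'] Pt'; [subst t'|]. lra. exfalso; apply NEx; eauto.
      * exfalso; apply NEx; eauto.
Qed.

Lemma finite_cover (K : R -> R -> Prop) (c f : R -> R -> R) a1 b1 a2 b2 :
 (forall x y, K x y -> a1 <= x <= b1 /\ a2 <= y <= b2) ->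
 (forall t1 t2, a1 <= t1 <= b1 -> a2 <= t2 <= b2 -> exists d, 0 < d /\
     forall x y, K x y -> Rabs (x - t1) < d -> Rabs (y - t2) < d -> K t1 t2 /\ c t1 t2 <= f x y) ->
 (exists x y, K x y) ->
 exists s1 s2, K s1 s2 /\ forall x y, K x y -> c s1 s2 <= f x y.
Proof.
  intros HK Hc [x0 [y0 H0]].
  set (Pd := fun (t : Compactness.Tn 2 R) (d : posreal) =>
     bounded_n 2 (a1,(a2,tt)) (b1,(b2,tt)) t ->
     forall x y, K x y -> Rabs (x - fst t) < d -> Rabs (y - fst (snd t)) < d ->
       K (fst t) (fst (snd t)) /\ c (fst t) (fst (snd t)) <= f x y).
  assert (G : forall t, exists d, Pd t d).
  { intros [t1 [t2 []]]. unfold Pd; simpl.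
    destruct (classic (a1 <= t1 <= b1 /\ a2 <= t2 <= b2)) as [[H1 H2]|N].
    - destruct (Hc t1 t2 H1 H2) as [d [Hd Hp]]. exists (mkposreal d Hd). intros _. exact Hp.
    - exists (mkposreal 1 Rlt_0_1). intros [[? ?] [[? ?] _]]. exfalso; apply N; split; split; auto. }
  set (delta := fun t => proj1_sig (constructive_indefinite_description _ (G t))).
  assert (Hdelta : forall t, Pd t (delta t)).
  { intro t. unfold delta. destruct (constructive_indefinite_description _ (G t)); auto. }
  apply NNPP. intro Hn.
  apply (compactness_list 2 (a1,(a2,tt)) (b1,(b2,tt)) delta). intros [l Hl].
  apply Hn.
  set (PK := fun t : Compactness.Tn 2 R => K (fst t) (fst (snd t))).
  assert (Cov : forall x y, K x y -> exists t, In t l /\ PK t /\ c (fst t) (fst (snd t)) <= f x y).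
  { intros x y Hxy. destruct (HK x y Hxy) as [B1 B2].
    destruct (Hl (x,(y,tt))) as [t [Ht [Bt Ct]]].
    { simpl. repeat split; lra. }
    exists t. split; auto.
    destruct t as [t1 [t2 []]]. simpl in Ct. destruct Ct as [C1 [C2 _]].
    assert (Hd := Hdelta (t1,(t2,tt)) Bt x y Hxy). simpl in Hd.
    exact (Hd C1 C2). }
  destruct (HK x0 y0 H0) as [B1 B2].
  destruct (Cov x0 y0 H0) as [t0 [Ht0 [Pt0 _]]].
  destruct (list_min PK (fun t => c (fst t) (fst (snd t))) l) as [s [Hs [Ps Hm]]].
  { exists t0; auto. }
  exists (fst s), (fst (snd s)). split; auto.
  intros x y Hxy. destruct (Cov x y Hxy) as [t [Ht [Pt Ct]]].
  specialize (Hm t Ht Pt). simpl in Hm. lra.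
Qed.

Lemma evt2 (K : R -> R -> Prop) (f : R -> R -> R) a1 b1 a2 b2 :
 (forall x y, K x y -> a1 <= x <= b1 /\ a2 <= y <= b2) ->
 (forall t1 t2, ~ K t1 t2 -> exists d, 0 < d /\
     forall x y, Rabs (x - t1) < d -> Rabs (y - t2) < d -> ~ K x y) ->
 (forall t1 t2, K t1 t2 -> forall e, 0 < e -> exists d, 0 < d /\
     forall x y, Rabs (x - t1) < d -> Rabs (y - t2) < d -> Rabs (f x y - f t1 t2) < e) ->
 (exists x y, K x y) ->
 exists s1 s2, K s1 s2 /\ forall x y, K x y -> f s1 s2 <= f x y.
Proof.
  intros HK Hcl Hct Hne.
  assert (Gen : forall c : R -> R -> R, (forall t1 t2, K t1 t2 -> c t1 t2 < f t1 t2) ->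
     exists s1 s2, K s1 s2 /\ forall x y, K x y -> c s1 s2 <= f x y).
  { intros c Hc. apply (finite_cover K c f a1 b1 a2 b2 HK); auto.
    intros t1 t2 _ _. destruct (classic (K t1 t2)) as [Kt|Nt].
    - destruct (Hct t1 t2 Kt (f t1 t2 - c t1 t2)) as [d [Hd Hp]].
      { specialize (Hc t1 t2 Kt). lra. }
      exists d. split; auto. intros x y _ H1 H2. split; auto.
      specialize (Hp x y H1 H2). apply Rabs_lt_between in Hp. lra.
    - destruct (Hcl t1 t2 Nt) as [d [Hd Hp]]. exists d. split; auto.
      intros x y Kxy H1 H2. exfalso. exact (Hp x y H1 H2 Kxy). }
  destruct (Gen (fun x y => f x y - 1)) as [s1 [s2 [Ks Hs]]].
  { intros; lra. }
  set (E := fun r => exists x y, K x y /\ r = - f x y).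
  destruct (completeness E) as [M [HM1 HM2]].
  { exists (- (f s1 s2 - 1)). intros r [x [y [Kxy ->]]]. specialize (Hs x y Kxy). lra. }
  { destruct Hne as [x [y Kxy]]. exists (- f x y). exists x, y. auto. }
  assert (Low : forall x y, K x y -> - M <= f x y).
  { intros x y Kxy. assert (E (- f x y)) by (exists x, y; auto). specialize (HM1 _ H). lra. }
  destruct (classic (exists x y, K x y /\ f x y <= - M)) as [[x [y [Kxy Hxy]]]|N].
  - exists x, y. split; auto. intros x' y' K'. specialize (Low x' y' K'). lra.
  - exfalso.
    assert (Gt : forall x y, K x y -> - M < f x y).
    { intros x y Kxy. destruct (Rle_lt_dec (f x y) (-M)); auto. exfalso; apply N; eauto. }
    destruct (Gen (fun x y => (- M + f x y)/2)) as [t1 [t2 [Kt Ht]]].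
    { intros x y Kxy. specialize (Gt x y Kxy). lra. }
    assert (M <= - ((- M + f t1 t2)/2)).
    { apply HM2. intros r [x [y [Kxy ->]]]. specialize (Ht x y Kxy). lra. }
    specialize (Gt t1 t2 Kt). lra.
Qed.

Lemma quot_deriv (f g : R -> R) x : ex_derive f x -> ex_derive g x -> f x ^ 2 + g x ^ 2 < 1 ->
  Derive (fun t => f t / sqrt (1 - f t ^ 2 - g t ^ 2)) x =
  (Derive f x * (1 - g x ^ 2) + f x * g x * Derive g x) / (sqrt (1 - f x ^ 2 - g x ^ 2)) ^ 3.
Proof.
  intros Hf Hg Hs.
  assert (Es : 1 + - (f x * (f x * 1)) + - (g x * (g x * 1)) = 1 - f x ^ 2 - g x ^ 2) by ring.
  assert (Hp : 0 < 1 - f x ^ 2 - g x ^ 2) by lra.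
  apply is_derive_unique.
  auto_derive.
  - repeat split; auto; try nra; apply Rgt_not_eq, sqrt_lt_R0; nra.
  - change (fun x0 : R => f x0) with f. change (fun x0 : R => g x0) with g.
    rewrite Es. set (s := 1 - f x ^ 2 - g x ^ 2) in *.
    assert (HW : sqrt s * sqrt s = s) by (apply sqrt_sqrt; lra).
    assert (Wp : 0 < sqrt s) by (apply sqrt_lt_R0; lra).
    assert (H3: sqrt s ^ 3 = sqrt s * (sqrt s * sqrt s)) by ring. rewrite HW in H3. rewrite H3.
    rewrite HW. unfold s. field. split; apply Rgt_not_eq; [lra | apply sqrt_lt_R0; lra].
Qed.

Lemma quot_deriv2 (f g : R -> R) x : ex_derive f x -> ex_derive g x -> f x ^ 2 + g x ^ 2 < 1 ->
  Derive (fun t => f t / sqrt (1 - g t ^ 2 - f t ^ 2)) x =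
  (Derive f x * (1 - g x ^ 2) + f x * g x * Derive g x) / (sqrt (1 - g x ^ 2 - f x ^ 2)) ^ 3.
Proof.
  intros. replace (1 - g x ^ 2 - f x ^ 2) with (1 - f x ^ 2 - g x ^ 2) by ring. rewrite <- quot_deriv by auto. apply Derive_ext. intro t.
  replace (1 - g t ^ 2 - f t ^ 2) with (1 - f t ^ 2 - g t ^ 2) by ring. reflexivity.
Qed.

Lemma pde_expand alpha U u x y : alpha_singular_maximal_graph alpha U u -> U (x,y) ->
  (1 - py u x y ^2) * px (px u) x y + px u x y * py u x y * (py (px u) x y + px (py u) x y)
  + (1 - px u x y ^2) * py (py u) x y = alpha * (1 - px u x y ^ 2 - py u x y ^ 2) / u x y.
Proof.
  intros [Hop [HC Heq]] H. destruct (Heq x y H) as [Hu [Hs HE]].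
  destruct (HC x y H) as [E1 [E2 [E3 [E4 [E5 [E6 _]]]]]].
  assert (D1 : px (fun a b => px u a b / Wf u a b) x y =
     (px (px u) x y * (1 - py u x y ^ 2) + px u x y * py u x y * px (py u) x y) / (sqrt (1 - px u x y ^ 2 - py u x y ^ 2)) ^ 3).
  { unfold Wf. exact (quot_deriv (fun t => px u t y) (fun t => py u t y) x E3 E5 Hs). }
  assert (D2 : py (fun a b => py u a b / Wf u a b) x y =
     (py (py u) x y * (1 - px u x y ^ 2) + py u x y * px u x y * py (px u) x y) / (sqrt (1 - px u x y ^ 2 - py u x y ^ 2)) ^ 3).
  { unfold Wf. exact (quot_deriv2 (fun t => py u x t) (fun t => px u x t) y E6 E4 ltac:(lra)). }
  rewrite D1, D2 in HE. unfold Wf in HE.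
  set (s := 1 - px u x y ^ 2 - py u x y ^ 2) in *.
  assert (Hp : 0 < s) by (unfold s; lra).
  assert (HW : sqrt s * sqrt s = s) by (apply sqrt_sqrt; lra).
  assert (Wp : 0 < sqrt s) by (apply sqrt_lt_R0; lra).
  assert (H3: sqrt s ^ 3 = sqrt s * (sqrt s * sqrt s)) by ring. rewrite HW in H3. rewrite H3 in HE.
  set (W := sqrt s) in *.
  apply (Rmult_eq_compat_r (W * s)) in HE.
  replace ((px (px u) x y * (1 - py u x y ^ 2) + px u x y * py u x y * px (py u) x y) / (W * s) +
       (py (py u) x y * (1 - px u x y ^ 2) + py u x y * px u x y * py (px u) x y) / (W * s)) with
     (((px (px u) x y * (1 - py u x y ^ 2) + px u x y * py u x y * px (py u) x y) +
       (py (py u) x y * (1 - px u x y ^ 2) + py u x y * px u x y * py (px u) x y)) / (W * s)) in HE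
     by (field; split; lra).
  unfold Rdiv in HE. rewrite Rmult_assoc, Rinv_l, Rmult_1_r in HE.
  2: { apply Rgt_not_eq. apply Rmult_lt_0_compat; lra. }
  transitivity ((px (px u) x y * (1 - py u x y ^ 2) + px u x y * py u x y * px (py u) x y) +
       (py (py u) x y * (1 - px u x y ^ 2) + py u x y * px u x y * py (px u) x y)). ring.
  rewrite HE. unfold s. field. split; apply Rgt_not_eq; lra.
Qed.

Definition hb (g z1 z2 c x y : R) : R := exp (- g * ((x - z1)^2 + (y - z2)^2)) - c.

Lemma h_line g z1 z2 c q1 q2 a b t :
  is_derive (fun s => hb g z1 z2 c (q1+s*a) (q2+s*b)) t
   (-2 * g * ((q1+t*a-z1)*a + (q2+t*b-z2)*b) * exp (- g * ((q1+t*a-z1)^2+(q2+t*b-z2)^2))).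
Proof. unfold hb. auto_derive; auto.
  match goal with |- _ * exp ?X = _ * exp ?Y => replace X with Y by ring end; ring. Qed.

Lemma h_line2 g z1 z2 q1 q2 a b :
  is_derive (fun t => -2 * g * ((q1+t*a-z1)*a + (q2+t*b-z2)*b) * exp (- g * ((q1+t*a-z1)^2+(q2+t*b-z2)^2))) 0
   ((4 * g^2 * ((q1-z1)*a + (q2-z2)*b)^2 - 2 * g * (a^2+b^2)) * exp (- g * ((q1-z1)^2+(q2-z2)^2))).
Proof.
  auto_derive; auto.
  match goal with |- context [exp ?X] => replace X with (- g * ((q1-z1)^2+(q2-z2)^2)) by ring end; ring.
Qed.

Lemma line_in_box d a b : 0 < d -> exists d', 0 < d' /\ forall t, Rabs t < d' -> Rabs (t*a) < d /\ Rabs (t*b) < d.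
Proof.
  intros Hd. exists (d / (Rabs a + Rabs b + 1)).
  assert (Hp : 0 < Rabs a + Rabs b + 1) by (generalize (Rabs_pos a) (Rabs_pos b); lra).
  split. apply Rdiv_lt_0_compat; lra.
  intros t Ht.
  assert (Ht' : Rabs t * (Rabs a + Rabs b + 1) < d).
  { apply (Rmult_lt_compat_r (Rabs a + Rabs b + 1)) in Ht; auto.
    unfold Rdiv in Ht. rewrite Rmult_assoc, Rinv_l, Rmult_1_r in Ht; lra. }
  rewrite !Rabs_mult. generalize (Rabs_pos t) (Rabs_pos a) (Rabs_pos b); split; nra.
Qed.

Lemma lin3 (f g h : R -> R) t df dg dh e : is_derive f t df -> is_derive g t dg -> is_derive h t dh ->
  is_derive (fun s => f s - g s - e * h s) t (df - dg - e * dh).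
Proof.
  intros Hf Hg Hh.
  apply (is_derive_minus (fun s => f s - g s) (fun s => e * h s)).
  - apply (is_derive_minus f g); auto.
  - apply is_derive_scal; auto.
Qed.

Lemma dir_second (U1 U2 : R*R -> Prop) (u1 u2 : R -> R -> R) (eps g z1 z2 c q1 q2 a b dq : R) :
 open U1 -> C2_on U1 u1 -> U1 (q1,q2) -> open U2 -> C2_on U2 u2 -> U2 (q1,q2) -> 0 < dq ->
 (forall x y, Rabs (x - q1) < dq -> Rabs (y - q2) < dq ->
    u1 q1 q2 - u2 q1 q2 - eps * hb g z1 z2 c q1 q2 <= u1 x y - u2 x y - eps * hb g z1 z2 c x y) ->
 (px u1 q1 q2 * a + py u1 q1 q2 * b) - (px u2 q1 q2 * a + py u2 q1 q2 * b)
   - eps * (-2 * g * ((q1-z1)*a + (q2-z2)*b) * exp (- g * ((q1-z1)^2+(q2-z2)^2))) = 0 /\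
 0 <= ((px (px u1) q1 q2 * a + py (px u1) q1 q2 * b) * a + (px (py u1) q1 q2 * a + py (py u1) q1 q2 * b) * b)
   - ((px (px u2) q1 q2 * a + py (px u2) q1 q2 * b) * a + (px (py u2) q1 q2 * a + py (py u2) q1 q2 * b) * b)
   - eps * ((4 * g^2 * ((q1-z1)*a + (q2-z2)*b)^2 - 2 * g * (a^2+b^2)) * exp (- g * ((q1-z1)^2+(q2-z2)^2))).
Proof.
  intros Ho1 HC1 H1 Ho2 HC2 H2 Hdq Hmin.
  destruct (u_line U1 u1 q1 q2 a b Ho1 HC1 H1) as [d1 [Hd1 L1]].
  destruct (u_line U2 u2 q1 q2 a b Ho2 HC2 H2) as [d2 [Hd2 L2]].
  destruct (line_in_box dq a b Hdq) as [d3 [Hd3 L3]].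
  set (d := Rmin d1 (Rmin d2 d3)).
  assert (Hd : 0 < d) by (unfold d; repeat apply Rmin_pos; auto).
  assert (Hdd1 : d <= d1) by (unfold d; apply Rmin_l).
  assert (Hdd2 : d <= d2) by (unfold d; eapply Rle_trans; [apply Rmin_r| apply Rmin_l]).
  assert (Hdd3 : d <= d3) by (unfold d; eapply Rle_trans; [apply Rmin_r| apply Rmin_r]).
  set (phi := fun s => u1 (q1+s*a) (q2+s*b) - u2 (q1+s*a) (q2+s*b) - eps * hb g z1 z2 c (q1+s*a) (q2+s*b)).
  set (psi := fun t => (px u1 (q1+t*a) (q2+t*b) * a + py u1 (q1+t*a) (q2+t*b) * b)
      - (px u2 (q1+t*a) (q2+t*b) * a + py u2 (q1+t*a) (q2+t*b) * b)
      - eps * (-2 * g * ((q1+t*a-z1)*a + (q2+t*b-z2)*b) * exp (- g * ((q1+t*a-z1)^2+(q2+t*b-z2)^2)))).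
  destruct (second_order phi psi
     (((px (px u1) q1 q2 * a + py (px u1) q1 q2 * b) * a + (px (py u1) q1 q2 * a + py (py u1) q1 q2 * b) * b)
   - ((px (px u2) q1 q2 * a + py (px u2) q1 q2 * b) * a + (px (py u2) q1 q2 * a + py (py u2) q1 q2 * b) * b)
   - eps * ((4 * g^2 * ((q1-z1)*a + (q2-z2)*b)^2 - 2 * g * (a^2+b^2)) * exp (- g * ((q1-z1)^2+(q2-z2)^2))))
     d Hd) as [P0 S0].
  - intros t Ht. unfold phi, psi.
    apply lin3.
    + apply L1; lra.
    + apply L2; lra.
    + apply h_line.
  - intros t Ht. unfold phi.
    replace (q1 + 0 * a) with q1 by ring. replace (q2 + 0 * b) with q2 by ring.
    destruct (L3 t ltac:(lra)) as [A B].
    apply Hmin.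
    + replace (q1 + t * a - q1) with (t*a) by ring. exact A.
    + replace (q2 + t * b - q2) with (t*b) by ring. exact B.
  - unfold psi. apply lin3.
    + apply (u_line2 U1 u1); auto.
    + apply (u_line2 U2 u2); auto.
    + apply h_line2.
  - split; auto.
    unfold psi in P0.
    replace (q1 + 0 * a) with q1 in P0 by ring. replace (q2 + 0 * b) with q2 in P0 by ring.
    replace (q1 + 0 * a - z1) with (q1 - z1) in P0 by ring. replace (q2 + 0 * b - z2) with (q2 - z2) in P0 by ring.
    exact P0.
Qed.

Lemma abs_le_sq x c : x^2 <= c^2 -> 0 <= c -> Rabs x <= c.
Proof. intros H Hc. unfold Rabs; destruct Rcase_abs; nra. Qed.

Lemma algebra_core (alpha P1 Q1 P2 Q2 A11 A12 A21 A22 B11 B12 B21 B22 v1 v2 e1 e2 E g eps dl c0 Ub M rho2 r0 : R) :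
 0 < eps -> 0 < E -> 0 < dl -> 0 < c0 -> 0 < rho2 -> 0 < r0 -> 0 <= M -> 1 <= g ->
 4 + 4 * (4*M + 2*Rabs alpha*Ub/c0^2) * r0 + Rabs alpha / c0^2 < g * dl * rho2 ->
 P1 - P2 - eps*(-2*g*e1*E) = 0 -> Q1 - Q2 - eps*(-2*g*e2*E) = 0 ->
 0 <= A11 - B11 - eps*((4*g^2*e1^2 - 2*g)*E) ->
 0 <= A22 - B22 - eps*((4*g^2*e2^2 - 2*g)*E) ->
 0 <= ((A11 * P1 + A12 * Q1) * P1 + (A21 * P1 + A22 * Q1) * Q1)
   - ((B11 * P1 + B12 * Q1) * P1 + (B21 * P1 + B22 * Q1) * Q1)
   - eps * ((4 * g^2 * (e1*P1 + e2*Q1)^2 - 2 * g * (P1^2+Q1^2)) * E) ->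
 (1 - Q1^2) * A11 + P1 * Q1 * (A12 + A21) + (1 - P1^2) * A22 = alpha * (1 - P1^2 - Q1^2) / v1 ->
 (1 - Q2^2) * B11 + P2 * Q2 * (B12 + B21) + (1 - P2^2) * B22 = alpha * (1 - P2^2 - Q2^2) / v2 ->
 P1^2 + Q1^2 <= 1 - dl -> P2^2 + Q2^2 < 1 ->
 c0 <= v1 -> c0 <= v2 -> v2 <= Ub -> 0 <= v1 - v2 <= eps * E ->
 Rabs B11 <= M -> Rabs B12 <= M -> Rabs B21 <= M -> Rabs B22 <= M ->
 rho2 <= e1^2 + e2^2 -> e1^2 <= r0^2 -> e2^2 <= r0^2 -> False.
Proof.
  intros Heps HE Hdl Hc0 Hrho Hr0 HM Hg HK HP HQ Y11 Y22 Sm PDE1 PDE2 Hs1 Hs2 Hv1 Hv2 Hv2b Hw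
    HB11 HB12 HB21 HB22 Hr Hre1 Hre2.
  set (s1 := P1^2 + Q1^2) in *. set (s2 := P2^2 + Q2^2) in *.
  set (H11 := (4*g^2*e1^2 - 2*g)*E) in *. set (H22 := (4*g^2*e2^2 - 2*g)*E) in *. set (H12 := 4*g^2*e1*e2*E) in *.
  set (dP := P1 - P2). set (dQ := Q1 - Q2).
  assert (EdP : dP = eps*(-2*g*e1*E)) by (unfold dP; lra).
  assert (EdQ : dQ = eps*(-2*g*e2*E)) by (unfold dQ; lra).
  assert (L0 : 0 <= (1 - Q1^2) * (A11 - B11 - eps*H11) + P1*Q1*((A12 - B12 - eps*H12) + (A21 - B21 - eps*H12))
                + (1 - P1^2) * (A22 - B22 - eps*H22)).
  { assert (Hs : 0 <= 1 - s1) by lra.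
    assert (Eq : (1 - Q1^2) * (A11 - B11 - eps*H11) + P1*Q1*((A12 - B12 - eps*H12) + (A21 - B21 - eps*H12))
                + (1 - P1^2) * (A22 - B22 - eps*H22) =
       (1 - s1) * (A11 - B11 - eps*H11) + (1 - s1) * (A22 - B22 - eps*H22) +
       (((A11 * P1 + A12 * Q1) * P1 + (A21 * P1 + A22 * Q1) * Q1)
   - ((B11 * P1 + B12 * Q1) * P1 + (B21 * P1 + B22 * Q1) * Q1)
   - eps * ((4 * g^2 * (e1*P1 + e2*Q1)^2 - 2 * g * (P1^2+Q1^2)) * E))).
    { unfold s1, H11, H12, H22. ring. }
    rewrite Eq. assert (0 <= (1 - s1) * (A11 - B11 - eps*H11)) by (apply Rmult_le_pos; lra).
    assert (0 <= (1 - s1) * (A22 - B22 - eps*H22)) by (apply Rmult_le_pos; lra).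
    unfold s1 in *. lra. }
  set (D := (Q2^2 - Q1^2)*B11 + (P1*Q1 - P2*Q2)*(B12 + B21) + (P2^2 - P1^2)*B22).
  set (LH := (1 - Q1^2) * H11 + P1 * Q1 * (H12 + H12) + (1 - P1^2) * H22).
  set (Z := alpha * (1 - s1) / v1 - alpha * (1 - s2) / v2).
  assert (Step2 : eps * LH <= Z - D).
  { assert (PDE1' : (1-Q1^2)*A11 + P1*Q1*(A12+A21) + (1-P1^2)*A22 = alpha*(1-s1)/v1)
      by (rewrite PDE1; unfold s1; f_equal; f_equal; ring).
    assert (PDE2' : (1-Q2^2)*B11 + P2*Q2*(B12+B21) + (1-P2^2)*B22 = alpha*(1-s2)/v2)
      by (rewrite PDE2; unfold s2; f_equal; f_equal; ring).
    assert (EE : Z - D - eps*LH = (1 - Q1^2) * (A11 - B11 - eps*H11) + P1*Q1*((A12 - B12 - eps*H12) + (A21 - B21 - eps*H12))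
                + (1 - P1^2) * (A22 - B22 - eps*H22)).
    { unfold Z. rewrite <- PDE1', <- PDE2'. unfold D, LH. ring. }
    lra. }
  assert (aP1 : Rabs P1 <= 1) by (apply abs_le_sq; unfold s1 in Hs1; nra).
  assert (aQ1 : Rabs Q1 <= 1) by (apply abs_le_sq; unfold s1 in Hs1; nra).
  assert (aP2 : Rabs P2 <= 1) by (apply abs_le_sq; unfold s2 in Hs2; nra).
  assert (aQ2 : Rabs Q2 <= 1) by (apply abs_le_sq; unfold s2 in Hs2; nra).
  set (X := Rabs dP + Rabs dQ).
  assert (BQ : Rabs (Q2^2 - Q1^2) <= 2 * Rabs dQ).
  { replace (Q2^2 - Q1^2) with (- dQ * (Q2 + Q1)) by (unfold dQ; ring).
    rewrite Rabs_mult, Rabs_Ropp. generalize (Rabs_triang Q2 Q1) (Rabs_pos dQ); nra. }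
  assert (BP : Rabs (P2^2 - P1^2) <= 2 * Rabs dP).
  { replace (P2^2 - P1^2) with (- dP * (P2 + P1)) by (unfold dP; ring).
    rewrite Rabs_mult, Rabs_Ropp. generalize (Rabs_triang P2 P1) (Rabs_pos dP); nra. }
  assert (BPQ : Rabs (P1*Q1 - P2*Q2) <= X).
  { replace (P1*Q1 - P2*Q2) with (P1 * dQ + Q2 * dP) by (unfold dP, dQ; ring).
    eapply Rle_trans. apply Rabs_triang. rewrite !Rabs_mult. unfold X.
    generalize (Rabs_pos dP) (Rabs_pos dQ) (Rabs_pos P1) (Rabs_pos Q2). nra. }
  assert (BD : Rabs D <= 4 * M * X).
  { unfold D. eapply Rle_trans. apply Rabs_triang. eapply Rle_trans. apply Rplus_le_compat_r. apply Rabs_triang.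
    rewrite !Rabs_mult.
    assert (Rabs (B12 + B21) <= 2 * M) by (eapply Rle_trans; [apply Rabs_triang| lra]).
    assert (T1 : Rabs (Q2^2-Q1^2)*Rabs B11 <= (2*Rabs dQ) * M) by (apply Rmult_le_compat; auto using Rabs_pos).
    assert (T2 : Rabs (P1*Q1 - P2*Q2)*Rabs (B12 + B21) <= X * (2*M)) by (apply Rmult_le_compat; auto using Rabs_pos).
    assert (T3 : Rabs (P2^2-P1^2)*Rabs B22 <= (2*Rabs dP) * M) by (apply Rmult_le_compat; auto using Rabs_pos).
    unfold X in *. lra. }
  assert (BZ : Rabs Z <= Rabs alpha * (2 * X * Ub + eps * E) / c0^2).
  { assert (EZ : Z = alpha * ((s2 - s1) * v2 + (1 - s2) * (v2 - v1)) / (v1 * v2)).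
    { unfold Z. field. split; lra. }
    rewrite EZ. unfold Rdiv. rewrite !Rabs_mult.
    assert (Bs : Rabs (s2 - s1) <= 2 * X).
    { replace (s2 - s1) with ((P2^2 - P1^2) + (Q2^2 - Q1^2)) by (unfold s1, s2; ring).
      eapply Rle_trans. apply Rabs_triang. unfold X. lra. }
    assert (Bn : Rabs ((s2 - s1) * v2 + (1 - s2) * (v2 - v1)) <= 2 * X * Ub + eps * E).
    { eapply Rle_trans. apply Rabs_triang. rewrite !Rabs_mult.
      rewrite (Rabs_pos_eq v2) by lra. rewrite (Rabs_pos_eq (1 - s2)) by lra.
      rewrite (Rabs_minus_sym v2 v1), (Rabs_pos_eq (v1 - v2)) by lra.
      assert (T1 : Rabs (s2 - s1) * v2 <= (2 * X) * Ub) by (apply Rmult_le_compat; auto using Rabs_pos; lra).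
      assert (0 <= s2) by (unfold s2; nra).
      assert (T2 : (1 - s2) * (v1 - v2) <= 1 * (eps * E)) by (apply Rmult_le_compat; lra).
      lra. }
    assert (Bi : Rabs (/ (v1 * v2)) <= / c0^2).
    { rewrite Rabs_pos_eq. apply Rinv_le_contravar. nra. nra.
      left. apply Rinv_0_lt_compat. nra. }
    assert (0 <= 2 * X * Ub + eps * E).
    { unfold X. generalize (Rabs_pos dP) (Rabs_pos dQ). nra. }
    apply Rmult_le_compat.
    - apply Rmult_le_pos; apply Rabs_pos.
    - apply Rabs_pos.
    - apply Rmult_le_compat_l; auto. apply Rabs_pos.
    - exact Bi. }
  assert (BX : X <= eps * (4 * g * r0 * E)).
  { unfold X. rewrite EdP, EdQ. rewrite !Rabs_mult.
    assert (Rabs e1 <= r0) by (apply abs_le_sq; lra).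
    assert (Rabs e2 <= r0) by (apply abs_le_sq; lra).
    rewrite (Rabs_pos_eq eps), (Rabs_pos_eq E), (Rabs_pos_eq g) by lra.
    replace (Rabs (-2)) with 2 by (unfold Rabs; destruct Rcase_abs; lra).
    assert (0 <= eps * g * E) by (apply Rmult_le_pos; [nra|lra]).
    assert (eps * g * E * (Rabs e1 + Rabs e2) <= eps * g * E * (2 * r0)) by (apply Rmult_le_compat_l; lra).
    nra. }
  assert (BLH : E * (4 * g^2 * dl * rho2 - 4 * g) <= LH).
  { assert (EL : LH = E * (4 * g^2 * ((1 - Q1^2)*e1^2 + 2*P1*Q1*e1*e2 + (1-P1^2)*e2^2) - 2 * g * (2 - s1))).
    { unfold LH, H11, H12, H22, s1. ring. }
    assert (Qf : dl * rho2 <= (1 - Q1^2)*e1^2 + 2*P1*Q1*e1*e2 + (1-P1^2)*e2^2).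
    { assert (EQ : (1 - Q1^2)*e1^2 + 2*P1*Q1*e1*e2 + (1-P1^2)*e2^2 = (1 - s1)*(e1^2+e2^2) + (P1*e1+Q1*e2)^2)
        by (unfold s1; ring).
      rewrite EQ. assert (0 <= (P1*e1+Q1*e2)^2) by apply pow2_ge_0. assert (dl * rho2 <= (1 - s1)*(e1^2+e2^2)) by (apply Rmult_le_compat; lra). lra. }
    rewrite EL. apply Rmult_le_compat_l. lra.
    assert (0 <= s1) by (unfold s1; nra). nra. }
  set (C1 := 4*M + 2*Rabs alpha*Ub/c0^2). set (C2 := Rabs alpha / c0^2).
  assert (HC1 : 0 <= C1).
  { unfold C1. assert (0 <= Rabs alpha * Ub / c0^2).
    { unfold Rdiv. apply Rmult_le_pos. apply Rmult_le_pos. apply Rabs_pos. lra.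
      left; apply Rinv_0_lt_compat; nra. }
    lra. }
  assert (HC2 : 0 <= C2).
  { unfold C2. unfold Rdiv. apply Rmult_le_pos. apply Rabs_pos. left; apply Rinv_0_lt_compat; nra. }
  assert (Fin : eps * E * (4 * g^2 * dl * rho2 - 4 * g) <= eps * E * (C1 * 4 * g * r0 + C2)).
  { assert (T1 : eps * (E * (4 * g^2 * dl * rho2 - 4 * g)) <= eps * LH) by (apply Rmult_le_compat_l; lra).
    assert (T2 : Z - D <= Rabs Z + Rabs D) by (generalize (Rle_abs Z) (Rle_abs (-D)); rewrite Rabs_Ropp; lra).
    assert (T3 : Rabs alpha * (2 * X * Ub + eps * E) / c0^2 = C1 * X - 4 * M * X + C2 * eps * E).
    { unfold C1, C2. field. lra. }
    assert (T4 : C1 * X <= C1 * (eps * (4 * g * r0 * E))) by (apply Rmult_le_compat_l; auto).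
    nra. }
  assert (Fin2 : 4 * g^2 * dl * rho2 - 4 * g <= C1 * 4 * g * r0 + C2).
  { apply (Rmult_le_reg_l (eps * E)). nra. exact Fin. }
  fold C1 C2 in HK.
  assert (g * (4 + 4 * C1 * r0 + C2) < g * (g * dl * rho2)) by (apply Rmult_lt_compat_l; lra).
  assert (0 <= C1 * r0) by nra.
  nra.
Qed.

Lemma c2d_eps f t1 t2 : continuity_2d_pt f t1 t2 -> forall e, 0 < e ->
  exists d, 0 < d /\ forall x y, Rabs (x - t1) < d -> Rabs (y - t2) < d -> Rabs (f x y - f t1 t2) < e.
Proof.
  intros Hc e He. destruct (Hc (mkposreal e He)) as [d Hd].
  exists d. split. apply cond_pos. intros x y Hx Hy. apply (Hd x y Hx Hy).
Qed.

Lemma sqd_cont2 z1 z2 t1 t2 : continuity_2d_pt (fun x y => (x - z1)^2 + (y - z2)^2) t1 t2.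
Proof.
  apply (continuity_2d_pt_ext (fun x y => (x - z1)*(x - z1) + (y - z2)*(y - z2))).
  { intros; ring. }
  apply continuity_2d_pt_plus; apply continuity_2d_pt_mult; apply continuity_2d_pt_minus;
   try apply continuity_2d_pt_id1; try apply continuity_2d_pt_id2; apply continuity_2d_pt_const.
Qed.

Lemma hb_cont2 g z1 z2 c t1 t2 : continuity_2d_pt (hb g z1 z2 c) t1 t2.
Proof.
  unfold hb. apply (continuity_2d_pt_minus (fun x y => exp (- g * ((x - z1) ^ 2 + (y - z2) ^ 2))) (fun _ _ => c)).
  - apply (continuity_1d_2d_pt_comp exp (fun x y => - g * ((x - z1) ^ 2 + (y - z2) ^ 2))).
    + apply derivable_continuous_pt, derivable_pt_exp.
    + apply (continuity_2d_pt_mult (fun _ _ => - g)). apply continuity_2d_pt_const. apply sqd_cont2.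
  - apply continuity_2d_pt_const.
Qed.

Lemma v_cont2 (U1 U2 : R*R -> Prop) (u1 u2 : R -> R -> R) eps g z1 z2 c t1 t2 :
  C2_on U1 u1 -> C2_on U2 u2 -> U1 (t1,t2) -> U2 (t1,t2) ->
  continuity_2d_pt (fun x y => u1 x y - u2 x y - eps * hb g z1 z2 c x y) t1 t2.
Proof.
  intros HC1 HC2 H1 H2.
  apply (continuity_2d_pt_minus (fun x y => u1 x y - u2 x y) (fun x y => eps * hb g z1 z2 c x y)).
  - apply continuity_2d_pt_minus; apply continuity_2d_pt_filterlim.
    + apply (HC1 t1 t2 H1). + apply (HC2 t1 t2 H2).
  - apply (continuity_2d_pt_mult (fun _ _ => eps)). apply continuity_2d_pt_const. apply hb_cont2.
Qed.

Lemma box_and (P Q : R -> R -> Prop) x y :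
  (exists d, 0 < d /\ forall u v, Rabs (u-x) < d -> Rabs (v-y) < d -> P u v) ->
  (exists d, 0 < d /\ forall u v, Rabs (u-x) < d -> Rabs (v-y) < d -> Q u v) ->
  exists d, 0 < d /\ forall u v, Rabs (u-x) < d -> Rabs (v-y) < d -> P u v /\ Q u v.
Proof.
  intros [d1 [H1 P1]] [d2 [H2 P2]]. exists (Rmin d1 d2). split. apply Rmin_pos; auto.
  intros u v Hu Hv. pose proof (Rmin_l d1 d2). pose proof (Rmin_r d1 d2). split.
  apply P1; lra. apply P2; lra.
Qed.

Lemma sq_close P P0 e : Rabs (P - P0) < e -> e <= 1 -> P0^2 <= 1 -> P^2 <= P0^2 + 3*e.
Proof.
  intros H He H0. assert (A : Rabs P0 <= 1) by (apply abs_le_sq; lra).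
  apply Rabs_lt_between in H. apply Rabs_le_between in A. nra.
Qed.

Lemma sq_pos_neq x : x <> 0 -> 0 < x^2.
Proof. intro H. destruct (Rdichotomy _ _ H); nra. Qed.

Theorem proposition4p2 (alpha : R) (U1 U2 : R * R -> Prop)
  (u1 u2 : R -> R -> R) (x0 y0 : R) :
  alpha <> 0 ->
  alpha_singular_maximal_graph alpha U1 u1 ->
  alpha_singular_maximal_graph alpha U2 u2 ->
  U1 (x0, y0) -> U2 (x0, y0) ->
  u1 x0 y0 = u2 x0 y0 ->
  px u1 x0 y0 = px u2 x0 y0 ->
  py u1 x0 y0 = py u2 x0 y0 ->
  locally (x0, y0) (fun q : R * R => u2 (fst q) (snd q) <= u1 (fst q) (snd q)) ->
  locally (x0, y0) (fun q : R * R => u1 (fst q) (snd q) = u2 (fst q) (snd q)).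
Proof.
  intros Ha Hg1 Hg2 HU1 HU2 Heq Hpx Hpy Habove.
  pose proof Hg1 as G1. destruct G1 as [Ho1 [HC1 HS1]].
  pose proof Hg2 as G2. destruct G2 as [Ho2 [HC2 HS2]].
  destruct (HS1 x0 y0 HU1) as [Hu1p [Hsp _]]. destruct (HS2 x0 y0 HU2) as [Hu2p _].
  set (eta := 1 - (px u1 x0 y0 ^2 + py u1 x0 y0 ^2)).
  assert (Heta : 0 < eta) by (unfold eta; lra).
  set (e0 := Rmin 1 (eta/12)).
  assert (He0 : 0 < e0) by (unfold e0; apply Rmin_pos; lra).
  set (c0 := u2 x0 y0 / 2).
  assert (Hc0 : 0 < c0) by (unfold c0; lra).
  set (M := 1 + Rabs (px (px u2) x0 y0) + Rabs (py (px u2) x0 y0) + Rabs (px (py u2) x0 y0) + Rabs (py (py u2) x0 y0)).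
  destruct (HC1 x0 y0 HU1) as [_ [_ [_ [_ [_ [_ [Cu1 [Cpx1 [Cpy1 _]]]]]]]]].
  destruct (HC2 x0 y0 HU2) as [_ [_ [_ [_ [_ [_ [Cu2 [_ [_ [Cxx [Cyx [Cxy Cyy]]]]]]]]]]]].
  assert (G : exists r, 0 < r /\ forall a b, Rabs (a - x0) < r -> Rabs (b - y0) < r ->
   (U1 (a,b) /\ U2 (a,b)) /\ u2 a b <= u1 a b /\ Rabs (u1 a b - u1 x0 y0) < c0 /\ Rabs (u2 a b - u2 x0 y0) < c0
   /\ Rabs (px u1 a b - px u1 x0 y0) < e0 /\ Rabs (py u1 a b - py u1 x0 y0) < e0
   /\ Rabs (px (px u2) a b - px (px u2) x0 y0) < 1 /\ Rabs (py (px u2) a b - py (px u2) x0 y0) < 1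
   /\ Rabs (px (py u2) a b - px (py u2) x0 y0) < 1 /\ Rabs (py (py u2) a b - py (py u2) x0 y0) < 1).
  { repeat apply box_and.
    - exact (loc2 U1 x0 y0 (Ho1 _ HU1)).
    - exact (loc2 U2 x0 y0 (Ho2 _ HU2)).
    - destruct (loc2 _ _ _ Habove) as [d [Hd Hp]]. exists d. split; [auto|].
      intros u v Hu Hv. exact (Hp u v Hu Hv).
    - apply cont2_eps; auto.
    - apply cont2_eps; auto.
    - apply cont2_eps; auto.
    - apply cont2_eps; auto.
    - apply cont2_eps; auto; lra.
    - apply cont2_eps; auto; lra.
    - apply cont2_eps; auto; lra.
    - apply cont2_eps; auto; lra. }
  destruct G as [r0 [Hr0 G]].
  set (dl := eta / 2). set (Ub := 4 * c0).
  assert (Good : forall a b, Rabs (a - x0) < r0 -> Rabs (b - y0) < r0 ->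
    U1 (a,b) /\ U2 (a,b) /\ u2 a b <= u1 a b /\ c0 <= u1 a b /\ c0 <= u2 a b /\ u2 a b <= Ub /\
    px u1 a b ^2 + py u1 a b ^2 <= 1 - dl /\
    Rabs (px (px u2) a b) <= M /\ Rabs (py (px u2) a b) <= M /\
    Rabs (px (py u2) a b) <= M /\ Rabs (py (py u2) a b) <= M).
  { intros a b Ha' Hb'.
    destruct (G a b Ha' Hb') as [[GU1 GU2] [Gab [Gu1 [Gu2 [Gp [Gq [Gxx [Gyx [Gxy Gyy]]]]]]]]].
    apply Rabs_lt_between in Gu1. apply Rabs_lt_between in Gu2.
    assert (e0le1 : e0 <= 1) by apply Rmin_l.
    assert (e0le : e0 <= eta/12) by apply Rmin_r.
    assert (HP0 : px u1 x0 y0 ^ 2 <= 1) by (generalize (pow2_ge_0 (py u1 x0 y0)); lra).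
    assert (HQ0 : py u1 x0 y0 ^ 2 <= 1) by (generalize (pow2_ge_0 (px u1 x0 y0)); lra).
    pose proof (sq_close _ _ _ Gp e0le1 HP0). pose proof (sq_close _ _ _ Gq e0le1 HQ0).
    assert (Mb : forall f f0, Rabs (f - f0) < 1 -> Rabs f0 <= M - 1 -> Rabs f <= M).
    { intros f f0 H1 H2. pose proof (Rabs_triang (f - f0) f0). replace (f - f0 + f0) with f in H3 by ring. lra. }
    assert (M1 : Rabs (px (px u2) x0 y0) <= M - 1) by (unfold M; generalize (Rabs_pos (py (px u2) x0 y0)) (Rabs_pos (px (py u2) x0 y0)) (Rabs_pos (py (py u2) x0 y0)); lra).
    assert (M2 : Rabs (py (px u2) x0 y0) <= M - 1) by (unfold M; generalize (Rabs_pos (px (px u2) x0 y0)) (Rabs_pos (px (py u2) x0 y0)) (Rabs_pos (py (py u2) x0 y0)); lra).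
    assert (M3 : Rabs (px (py u2) x0 y0) <= M - 1) by (unfold M; generalize (Rabs_pos (py (px u2) x0 y0)) (Rabs_pos (px (px u2) x0 y0)) (Rabs_pos (py (py u2) x0 y0)); lra).
    assert (M4 : Rabs (py (py u2) x0 y0) <= M - 1) by (unfold M; generalize (Rabs_pos (py (px u2) x0 y0)) (Rabs_pos (px (py u2) x0 y0)) (Rabs_pos (px (px u2) x0 y0)); lra).
    unfold Ub, dl. unfold c0 in *. unfold eta in *.
    repeat split; auto; try lra; eapply Mb; eauto. }
  clear G.
  apply (loc2_inv _ x0 y0 (r0/8)). lra.
  intros z1 z2 Hz1 Hz2. simpl.
  destruct (Good z1 z2 ltac:(lra) ltac:(lra)) as [Z1 [Z2 [Zle _]]].
  destruct (Rle_lt_or_eq_dec _ _ Zle) as [Hlt|Heqz]; [|auto].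
  exfalso.
  set (R2 := (x0 - z1)^2 + (y0 - z2)^2).
  assert (HR2 : 0 < R2).
  { unfold R2. destruct (Req_dec x0 z1) as [E1|E1]; destruct (Req_dec y0 z2) as [E2|E2].
    - subst. lra.
    - generalize (sq_pos_neq (y0 - z2) ltac:(lra)) (pow2_ge_0 (x0 - z1)). lra.
    - generalize (sq_pos_neq (x0 - z1) ltac:(lra)) (pow2_ge_0 (y0 - z2)). lra.
    - generalize (sq_pos_neq (x0 - z1) ltac:(lra)) (pow2_ge_0 (y0 - z2)). lra. }
  assert (HR2b : R2 < (r0/4)^2).
  { unfold R2. apply Rabs_lt_between in Hz1. apply Rabs_lt_between in Hz2. nra. }
  set (m := (u1 z1 z2 - u2 z1 z2) / 2).
  assert (Hm : 0 < m) by (unfold m; lra).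
  destruct (c2d_eps (fun x y => u1 x y - u2 x y) z1 z2) with (e := m) as [dz [Hdz Hwz]]; auto.
  { apply continuity_2d_pt_minus; apply continuity_2d_pt_filterlim.
    apply (HC1 z1 z2 Z1). apply (HC2 z1 z2 Z2). }
  set (rho2 := Rmin (dz^2) R2 / 4).
  assert (Hrho : 0 < rho2) by (unfold rho2; assert (0 < Rmin (dz^2) R2) by (apply Rmin_pos; nra); lra).
  assert (Hrho1 : rho2 <= dz^2/4) by (unfold rho2; generalize (Rmin_l (dz^2) R2); lra).
  assert (Hrho2 : rho2 <= R2/4) by (unfold rho2; generalize (Rmin_r (dz^2) R2); lra).
  set (C1 := 4*M + 2*Rabs alpha*Ub/c0^2). set (C2 := Rabs alpha / c0^2).
  set (Kc := 4 + 4 * C1 * r0 + C2).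
  assert (Hdl : 0 < dl) by (unfold dl; lra).
  set (gam := 1 + Kc / (dl * rho2)).
  assert (HKc : 0 <= Kc).
  { unfold Kc, C1, C2. assert (0 <= Rabs alpha * Ub / c0^2).
    { unfold Rdiv. apply Rmult_le_pos. apply Rmult_le_pos. apply Rabs_pos. unfold Ub; lra.
      left; apply Rinv_0_lt_compat; nra. }
    assert (0 <= Rabs alpha / c0^2).
    { unfold Rdiv. apply Rmult_le_pos. apply Rabs_pos. left; apply Rinv_0_lt_compat; nra. }
    assert (0 <= M) by (unfold M; generalize (Rabs_pos (py (px u2) x0 y0)) (Rabs_pos (px (py u2) x0 y0)) (Rabs_pos (py (py u2) x0 y0)) (Rabs_pos (px (px u2) x0 y0)); lra).
    nra. }
  assert (Hgam : 1 <= gam).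
  { unfold gam. assert (0 <= Kc / (dl * rho2)) by (apply Rdiv_le_0_compat; auto; nra). lra. }
  assert (HK : Kc < gam * dl * rho2).
  { unfold gam. replace ((1 + Kc / (dl * rho2)) * dl * rho2) with (dl * rho2 + Kc) by (field; split; lra). nra. }
  set (cc := exp (- gam * R2)).
  set (eps := m).
  set (v := fun x y => u1 x y - u2 x y - eps * hb gam z1 z2 cc x y).
  set (K := fun x y => rho2 <= (x - z1)^2 + (y - z2)^2 <= R2).
  assert (InK : forall x y, K x y -> Rabs (x - x0) < r0 /\ Rabs (y - y0) < r0 /\
       (x - z1)^2 < r0^2 /\ (y - z2)^2 < r0^2 /\ Rabs (x - z1) <= r0/4 /\ Rabs (y - z2) <= r0/4).
  { intros x y [Kx1 Kx2].
    assert (A1 : Rabs (x - z1) <= r0/4) by (apply abs_le_sq; [generalize (pow2_ge_0 (y - z2)); lra| lra]).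
    assert (A2 : Rabs (y - z2) <= r0/4) by (apply abs_le_sq; [generalize (pow2_ge_0 (x - z1)); lra| lra]).
    apply Rabs_le_between in A1. apply Rabs_le_between in A2.
    apply Rabs_lt_between in Hz1. apply Rabs_lt_between in Hz2.
    split; [apply Rabs_lt_between; lra|]. split; [apply Rabs_lt_between; lra|].
    split; [generalize (pow2_ge_0 (y - z2)); nra|]. split; [generalize (pow2_ge_0 (x - z1)); nra|].
    split; apply Rabs_le_between; lra. }
  destruct (evt2 K v (z1 - r0) (z1 + r0) (z2 - r0) (z2 + r0)) as [q1 [q2 [Kq Hmin]]].
  - intros x y Kxy. destruct (InK x y Kxy) as [_ [_ [_ [_ [A1 A2]]]]].
    apply Rabs_le_between in A1. apply Rabs_le_between in A2. split; lra.
  - intros t1 t2 NK.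
    pose proof (c2d_eps _ t1 t2 (sqd_cont2 z1 z2 t1 t2)) as CS. cbv beta in CS.
    destruct (Rlt_le_dec ((t1 - z1)^2 + (t2 - z2)^2) rho2) as [Lt|Ge].
    + destruct (CS (rho2 - ((t1 - z1)^2 + (t2 - z2)^2))) as [d [Hd Hp]]. lra.
      exists d. split; auto. intros x y Hx Hy [Kx _]. specialize (Hp x y Hx Hy).
      apply Rabs_lt_between in Hp. lra.
    + destruct (Rle_lt_dec ((t1 - z1)^2 + (t2 - z2)^2) R2) as [Le|Gt].
      { exfalso. apply NK. split; auto. }
      destruct (CS (((t1 - z1)^2 + (t2 - z2)^2) - R2)) as [d [Hd Hp]]. lra.
      exists d. split; auto. intros x y Hx Hy [_ Kx]. specialize (Hp x y Hx Hy).
      apply Rabs_lt_between in Hp. lra.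
  - intros t1 t2 Kt. destruct (InK t1 t2 Kt) as [B1 [B2 _]]. destruct (Good t1 t2 B1 B2) as [T1 [T2 _]].
    apply c2d_eps. unfold v. apply (v_cont2 U1 U2); auto.
  - exists x0, y0. unfold K. fold R2. lra.
  - destruct (InK q1 q2 Kq) as [B1 [B2 [Be1 [Be2 _]]]].
    destruct (Good q1 q2 B1 B2) as [Q1U [Q2U [Qle [Qc1 [Qc2 [QUb [Qs [QM1 [QM2 [QM3 QM4]]]]]]]]]].
    destruct (Rlt_le_dec (v q1 q2) 0) as [Neg|Pos].
    + set (sq := (q1 - z1)^2 + (q2 - z2)^2).
      set (E := exp (- gam * sq)).
      assert (HE : 0 < E) by apply exp_pos.
      assert (Hcc : 0 < cc) by apply exp_pos.
      assert (Hhb : hb gam z1 z2 cc q1 q2 = E - cc) by reflexivity.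
      assert (Hwq : u1 q1 q2 - u2 q1 q2 < eps * (E - cc)).
      { unfold v in Neg. rewrite Hhb in Neg. lra. }
      destruct Kq as [Kq1 Kq2].
      assert (Sq_lt : sq < R2).
      { destruct (Rle_lt_or_eq_dec _ _ Kq2) as [|EQ]; auto. exfalso.
        assert (E = cc) by (unfold E, cc, sq; rewrite EQ; reflexivity).
        unfold eps in *. nra. }
      assert (Sq_gt : rho2 < sq).
      { destruct (Rle_lt_or_eq_dec _ _ Kq1) as [|EQ]; auto. exfalso.
        assert (A1 : Rabs (q1 - z1) < dz).
        { apply Rle_lt_trans with (dz/2); [|lra]. apply abs_le_sq; [|lra].
          generalize (pow2_ge_0 (q2 - z2)); unfold sq in EQ. intro. nra. }
        assert (A2 : Rabs (q2 - z2) < dz).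
        { apply Rle_lt_trans with (dz/2); [|lra]. apply abs_le_sq; [|lra].
          generalize (pow2_ge_0 (q1 - z1)); unfold sq in EQ. intro. nra. }
        specialize (Hwz q1 q2 A1 A2). cbv beta in Hwz. apply Rabs_lt_between in Hwz.
        assert (E < 1).
        { unfold E. rewrite <- exp_0. apply exp_increasing. assert (0 < sq) by (unfold sq; lra). assert (0 < gam * sq) by (apply Rmult_lt_0_compat; lra). lra. }
        assert (Em : eps = m) by reflexivity. assert (Hm2 : u1 z1 z2 - u2 z1 z2 = 2*m) by (unfold m; field).
        assert (eps * (E - cc) < eps) by (rewrite Em; assert (0 < m * (1 - E + cc)) by (apply Rmult_lt_0_compat; lra); lra).
        lra. }
      destruct (c2d_eps _ q1 q2 (sqd_cont2 z1 z2 q1 q2)) with (e := Rmin (sq - rho2) (R2 - sq)) as [dq [Hdq Hbox]].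
      { apply Rmin_pos; lra. }
      assert (LocMin : forall x y, Rabs (x - q1) < dq -> Rabs (y - q2) < dq ->
          u1 q1 q2 - u2 q1 q2 - eps * hb gam z1 z2 cc q1 q2 <= u1 x y - u2 x y - eps * hb gam z1 z2 cc x y).
      { intros x y Hx Hy. apply (Hmin x y). specialize (Hbox x y Hx Hy). cbv beta in Hbox. fold sq in Hbox.
        apply Rabs_lt_between in Hbox. generalize (Rmin_l (sq - rho2) (R2 - sq)) (Rmin_r (sq - rho2) (R2 - sq)).
        intros. unfold K. split; lra. }
      set (P1 := px u1 q1 q2). set (Q1 := py u1 q1 q2).
      destruct (dir_second U1 U2 u1 u2 eps gam z1 z2 cc q1 q2 1 0 dq Ho1 HC1 Q1U Ho2 HC2 Q2U Hdq LocMin) as [F1 S1].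
      destruct (dir_second U1 U2 u1 u2 eps gam z1 z2 cc q1 q2 0 1 dq Ho1 HC1 Q1U Ho2 HC2 Q2U Hdq LocMin) as [F2 S2].
      destruct (dir_second U1 U2 u1 u2 eps gam z1 z2 cc q1 q2 P1 Q1 dq Ho1 HC1 Q1U Ho2 HC2 Q2U Hdq LocMin) as [_ S3].
      pose proof (pde_expand alpha U1 u1 q1 q2 Hg1 Q1U) as PDE1.
      pose proof (pde_expand alpha U2 u2 q1 q2 Hg2 Q2U) as PDE2.
      destruct (HS2 q1 q2 Q2U) as [_ [Hs2 _]].
      fold sq in F1, F2, S1, S2, S3. fold E in F1, F2, S1, S2, S3.
      apply (algebra_core alpha P1 Q1 (px u2 q1 q2) (py u2 q1 q2)
        (px (px u1) q1 q2) (py (px u1) q1 q2) (px (py u1) q1 q2) (py (py u1) q1 q2)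
        (px (px u2) q1 q2) (py (px u2) q1 q2) (px (py u2) q1 q2) (py (py u2) q1 q2)
        (u1 q1 q2) (u2 q1 q2) (q1 - z1) (q2 - z2) E gam eps dl c0 Ub M rho2 r0).
      * unfold eps; lra.
      * exact HE.
      * exact Hdl.
      * exact Hc0.
      * exact Hrho.
      * exact Hr0.
      * unfold M; generalize (Rabs_pos (py (px u2) x0 y0)) (Rabs_pos (px (py u2) x0 y0)) (Rabs_pos (py (py u2) x0 y0)) (Rabs_pos (px (px u2) x0 y0)); lra.
      * exact Hgam.
      * exact HK.
      * unfold P1, Q1 in *. rewrite <- F1. ring.
      * unfold P1, Q1 in *. rewrite <- F2. ring.
      * unfold P1, Q1 in *. eapply Rle_trans; [exact S1|]. right. ring.
      * unfold P1, Q1 in *. eapply Rle_trans; [exact S2|]. right. ring.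
      * unfold P1, Q1 in *. eapply Rle_trans; [exact S3|]. right. ring.
      * exact PDE1.
      * exact PDE2.
      * exact Qs.
      * exact Hs2.
      * exact Qc1.
      * exact Qc2.
      * exact QUb.
      * split; [lra|]. assert (0 < eps) by (unfold eps; lra). nra.
      * exact QM1.
      * exact QM2.
      * exact QM3.
      * exact QM4.
      * fold sq; lra.
      * lra.
      * lra.
    + set (a := z1 - x0). set (b := z2 - y0).
      destruct (u_line U1 u1 x0 y0 a b Ho1 HC1 HU1) as [d1 [Hd1 L1]].
      destruct (u_line U2 u2 x0 y0 a b Ho2 HC2 HU2) as [d2 [Hd2 L2]].
      assert (A0 : Rabs 0 < d1) by (rewrite Rabs_R0; lra).
      assert (A0' : Rabs 0 < d2) by (rewrite Rabs_R0; lra).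
      destruct (L1 0 A0) as [_ D1]. destruct (L2 0 A0') as [_ D2].
      pose proof (h_line gam z1 z2 cc x0 y0 a b 0) as D3.
      pose proof (lin3 _ _ _ 0 _ _ _ eps D1 D2 D3) as DL.
      pose proof (onesided _ _ (1/2) ltac:(lra) DL) as ON.
      assert (Hx0 : x0 + 0 * a = x0) by ring. assert (Hy0 : y0 + 0 * b = y0) by ring.
      rewrite Hx0, Hy0 in ON.
      assert (HE : exp (- gam * ((x0 - z1)^2 + (y0 - z2)^2)) = cc) by (unfold cc, R2; reflexivity).
      assert (Nn : 0 <= px u1 x0 y0 * a + py u1 x0 y0 * b - (px u2 x0 y0 * a + py u2 x0 y0 * b) -
         eps * (-2 * gam * ((x0 - z1) * a + (y0 - z2) * b) * exp (- gam * ((x0 - z1) ^ 2 + (y0 - z2) ^ 2)))).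
      { apply ON. intros t Ht. cbv beta. try rewrite Hx0; try rewrite Hy0.
        assert (Kt : K (x0 + t * a) (y0 + t * b)).
        { unfold K. replace ((x0 + t * a - z1) ^ 2 + (y0 + t * b - z2) ^ 2) with ((1 - t)^2 * R2)
            by (unfold R2, a, b; ring).
          assert (1/4 <= (1-t)^2) by nra. assert ((1-t)^2 <= 1) by nra. split; nra. }
        specialize (Hmin _ _ Kt). unfold v in Hmin, Pos.
        assert (V0 : u1 x0 y0 - u2 x0 y0 - eps * hb gam z1 z2 cc x0 y0 = 0).
        { unfold hb. rewrite HE, Heq. ring. }
        rewrite V0. lra. }
      rewrite Hpx, Hpy in Nn.
      replace ((x0 - z1) * a + (y0 - z2) * b) with (- R2) in Nn by (unfold R2, a, b; ring).
      rewrite HE in Nn.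
      assert (0 < cc) by apply exp_pos.
      assert (0 < eps * (2 * gam * R2 * cc)) by (apply Rmult_lt_0_compat; [unfold eps; lra|]; repeat apply Rmult_lt_0_compat; lra).
      nra.
Qed.
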